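(* Let $G$ be a finite graph with minimum degree at least $3$, let $x_0$ be a vertex of $G$, let $P$ be a longest path in $G$ starting at $x_0$, and let $(S,T)$ be the Pósa pair of $P$ (defined in the context). Then $$e(S\cup T)>|S\cup T|,$$ where $e(A)$ denotes the number of edges of the subgraph of $G$ induced by $A$; i.e. the induced subgraph $G(S\cup T)$ has edge density strictly greater than $1$.
   Context: Rotations and Pósa sets: If $Q=x_0x_1\dots x_h$ is a path from $x_0$ and $\{x_h,x_i\}$ is an edge of $G$ for some $i<h-1$, then $Q'=x_0\dots x_i x_h x_{h-1}\dots x_{i+1}$ is again a path from $x_0$ of the same length, said to be obtained from $Q$ by a rotation. For a longest path $P=x_0\dots x_h$ from $x_0$, $S$ is the set consisting of $x_h$ and the endpoints (other than $x_0$) of all paths obtainable from $P$ by any finite sequence of rotations, and $T=N(S)$ is the set of vertices not in $S$ having a neighbor in $S$. *)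

(* Defs.v *)
(* A finite simple graph is a symmetric irreflexive relation
   e on a finType V. A path from x0 is represented by its full vertex
   sequence q = [:: x0; x1; ...; xh]. *)
From Stdlib Require Import Relation_Definitions Relation_Operators.
From mathcomp Require Import all_boot.
Set Implicit Arguments.
Unset Strict Implicit.
Unset Printing Implicit Defensive.

Section Graph.
Variables (V : finType) (e : rel V).

Definition is_path_from (x0 : V) (q : seq V) : bool :=
  [&& head x0 q == x0, q != [::], path e x0 (behead q) & uniq q].

Definition gdeg (v : V) : nat := #|[set w | e v w]|.

(* q' is obtained from q by one rotation: for q = x0 ... xh, an edge {xh, xi}
   with i < h-1 gives q' = x0 ... xi xh x_{h-1} ... x_{i+1}. *)
Definition rotation_step (x0 : V) (q q' : seq V) : Prop :=
  exists i : nat, [/\ i.+2 < size q,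
                      e (last x0 q) (nth x0 q i) &
                      q' = take i.+1 q ++ rev (drop i.+1 q)].

Definition rotations (x0 : V) : relation (seq V) :=
  clos_refl_trans (seq V) (rotation_step x0).

Definition edges_in (A : {set V}) : nat :=
  #|[set E : {set V} | (E \subset A) &&
        [exists x, exists y, e x y && (E == [set x; y])]]|.

Definition nbhd_out (S : {set V}) : {set V} :=
  [set v | (v \notin S) && [exists u in S, e u v]].

End Graph.

(* Main.v *)
Require Import Defs.
From Stdlib Require Import Relation_Definitions Relation_Operators Operators_Properties.
From mathcomp Require Import all_boot zify.
Set Implicit Arguments.
Unset Strict Implicit.
Unset Printing Implicit Defensive.

Lemma dcount (I J : finType) (A : {set I}) (B : {set J}) (r : I -> J -> bool) :
  \sum_(a in A) #|[set b in B | r a b]| = \sum_(b in B) #|[set a in A | r a b]|.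
Proof.
have h (K L : finType) (C : {set L}) (q : K -> L -> bool) a :
    #|[set b in C | q a b]| = \sum_(b in C) (q a b : nat).
  rewrite -sum1_card (eq_bigl (fun b => (b \in C) && q a b)); last by move=> b; rewrite inE.
  by rewrite big_mkcondr; apply: eq_bigr => b _; case: (q a b).
under eq_bigr => a _ do rewrite h.
under [RHS]eq_bigr => b _ do rewrite (h _ _ A (fun b a => r a b)).
exact: exchange_big.
Qed.

Lemma sum_tight_ge (I : finType) (A : {set I}) (f : I -> nat) b :
  (forall i, i \in A -> b <= f i) -> \sum_(i in A) f i <= #|A| * b ->
  forall i, i \in A -> f i = b.
Proof.
move=> hb hs.
have h0 : \sum_(i in A) (f i - b) = 0.
  by rewrite (sumnB _ (E1 := fun _ => b)) // sum_nat_const; lia.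
move=> i hi; have /eqP := h0; rewrite sum_nat_eq0 => /forall_inP /(_ i hi).
by have := hb i hi; lia.
Qed.

Lemma sum_tight_le (I : finType) (A : {set I}) (f : I -> nat) b :
  (forall i, i \in A -> f i <= b) -> #|A| * b <= \sum_(i in A) f i ->
  forall i, i \in A -> f i = b.
Proof.
move=> hb hs.
have h0 : \sum_(i in A) (b - f i) = 0.
  by rewrite (sumnB _ (E2 := fun _ => b)) // sum_nat_const; lia.
move=> i hi; have /eqP := h0; rewrite sum_nat_eq0 => /forall_inP /(_ i hi).
by have := hb i hi; lia.
Qed.

Section Posa.
Variables (V : finType) (e : rel V).
Hypothesis e_sym : symmetric e.
Hypothesis e_irr : irreflexive e.
Hypothesis mindeg : forall v : V, 3 <= gdeg e v.
Variables (x0 : V) (P : seq V).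
Hypothesis P_path : is_path_from e x0 P.
Hypothesis P_longest : forall q : seq V, is_path_from e x0 q -> size q <= size P.
Variable S : {set V}.
Hypothesis S_def : forall v : V, v \in S <->
       (v = last x0 P \/
        exists q : seq V, rotations e x0 P q /\ last x0 q = v /\ v <> x0).

Definition rot (i : nat) (Q : seq V) := take i.+1 Q ++ rev (drop i.+1 Q).

Lemma size_rot i Q : i < size Q -> size (rot i Q) = size Q.
Proof. move=> hi; rewrite /rot size_cat size_rev size_take size_drop; case: ifP; lia. Qed.

Lemma nth_rot Q i j : i < size Q -> j < size Q ->
  nth x0 (rot i Q) j = if j <= i then nth x0 Q j else nth x0 Q (size Q + i - j).
Proof.
move=> hi hj; rewrite /rot nth_cat size_takel //.
case: ifP => hji.
  by rewrite nth_take // ifT.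
rewrite ifF; last by lia.
rewrite nth_rev size_drop; last by lia.
rewrite nth_drop; congr nth; lia.
Qed.

Definition okp (Q : seq V) := [/\ perm_eq Q P, nth x0 Q 0 = x0 &
   forall k, k.+1 < size Q -> e (nth x0 Q k) (nth x0 Q k.+1)].

Lemma okpP : okp P.
Proof.
rewrite /okp; move: P_path; case: P => [|a P0] //= /and4P [/= /eqP -> _ hp _].
split => //.
move=> k hk; move/(pathP x0): hp => /(_ k hk) //.
Qed.

Lemma ok_rot Q i : okp Q -> i.+2 < size Q -> e (last x0 Q) (nth x0 Q i) -> okp (rot i Q).
Proof.
case=> hperm h0 hc hi he; have hi' : i < size Q by lia.
split.
- apply: perm_trans hperm; rewrite -{2}(cat_take_drop i.+1 Q) /rot.
  by apply: perm_cat => //; rewrite perm_rev.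
- by rewrite nth_rot //; lia.
move=> k; rewrite size_rot // => hk.
rewrite !nth_rot //; try lia.
case: (ltngtP k.+1 i.+1) => hki.
- have h1 : (k <= i) = true by lia.
  have h2 : (k.+1 <= i) = true by lia.
  rewrite h1 h2; apply: hc; lia.
- have h1 : (k <= i) = false by lia.
  have h2 : (k.+1 <= i) = false by lia.
  rewrite h1 h2.
  have -> : size Q + i - k = (size Q + i - k.+1).+1 by lia.
  rewrite e_sym; apply: hc; lia.
- have -> : k = i by lia.
  rewrite leqnn ltnn.
  have -> : size Q + i - i.+1 = (size Q).-1 by lia.
  by rewrite nth_last e_sym.
Qed.

Lemma rot_ind (Inv : seq V -> Prop) : Inv P ->
  (forall A B, rotations e x0 P A -> rotation_step e x0 A B -> Inv A -> Inv B) ->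
  forall Q, rotations e x0 P Q -> Inv Q.
Proof.
move=> h0 hs Q HQ; have H := clos_rt_rtn1 _ _ _ _ HQ; clear HQ.
elim: H => // y z hyz hxy IH.
apply: hs hyz IH; exact: clos_rtn1_rt.
Qed.

Lemma rot_ok Q : rotations e x0 P Q -> okp Q.
Proof.
apply: rot_ind; first exact: okpP.
move=> A B _ [i [hi he ->]] hA; exact: ok_rot.
Qed.


Lemma P_uniq : uniq P.
Proof. by case/and4P: P_path. Qed.

Lemma size_P2 : 1 < size P.
Proof.
have : 0 < gdeg e x0 by apply: leq_trans (mindeg x0).
rewrite /gdeg card_gt0 => /set0Pn [y]; rewrite inE => hy.
have : is_path_from e x0 [:: x0; y].
  have hxy : x0 != y by apply/eqP => hxy; move: hy; rewrite hxy e_irr.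
  by rewrite /is_path_from /= hy inE hxy eqxx.
by move/P_longest.
Qed.

Lemma ok_size Q : okp Q -> size Q = size P.
Proof. by case=> /perm_size. Qed.
Lemma ok_uniq Q : okp Q -> uniq Q.
Proof. by case=> /perm_uniq ->; rewrite P_uniq. Qed.
Lemma ok_mem Q : okp Q -> Q =i P.
Proof. by case=> /perm_mem. Qed.

Lemma ok_cons Q : okp Q -> Q = x0 :: behead Q.
Proof.
move=> hQ; have hs := ok_size hQ; case: hQ => _ h0 _.
move: hs h0; case: Q => [|a Q0] /=; last by move=> _ ->.
by move=> h; move: size_P2; rewrite -h.
Qed.

Lemma last_nth Q : okp Q -> last x0 Q = nth x0 Q (size P).-1.
Proof. by move=> hQ; rewrite -(ok_size hQ) nth_last. Qed.

Lemma last_neq_x0 Q : okp Q -> last x0 Q != x0.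
Proof.
move=> hQ; rewrite last_nth //.
have h2 := size_P2; have hs := ok_size hQ.
case: (hQ) => _ h0 _; rewrite -{2}h0 nth_uniq ?hs ?(ok_uniq hQ) //; lia.
Qed.

Lemma lastQ_S Q : rotations e x0 P Q -> last x0 Q \in S.
Proof.
move=> hr; apply/S_def; right; exists Q; split => //; split => //.
apply/eqP; exact: last_neq_x0 (rot_ok hr).
Qed.

Lemma S_real s : s \in S -> exists Q, rotations e x0 P Q /\ last x0 Q = s.
Proof.
case/S_def => [->|[q [hq [hl _]]]]; last by exists q.
by exists P; split => //; apply: rt_refl.
Qed.

Lemma x0_notin_S : x0 \notin S.
Proof.
apply/negP => /S_def [h|[q [_ [_ h]]]] //.
by move: (last_neq_x0 okpP); rewrite -h eqxx.
Qed.

Lemma longest Q y : rotations e x0 P Q -> e (last x0 Q) y -> y \in Q.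
Proof.
move=> hr he; have hQ := rot_ok hr; apply/negP => hy.
have : is_path_from e x0 (rcons Q y).
  move: hy he (ok_uniq hQ) (hQ); rewrite (ok_cons hQ).
  set Q0 := behead Q => hy he hu [_ _ hc].
  move: hy hu => /negP; rewrite /= !inE negb_or => /andP [hyx hyq] /andP [hxq hq].
  rewrite /is_path_from /= eqxx rcons_path mem_rcons inE negb_or eq_sym hyx hxq.
  rewrite rcons_uniq hyq hq /= in he *; rewrite he !andbT.
  apply/(pathP x0) => i hi; apply: (hc i) => /=; lia.
move/P_longest; rewrite size_rcons (ok_size hQ); lia.
Qed.

Lemma last_rot Q i : i.+2 < size Q -> last x0 (rot i Q) = nth x0 Q i.+1.
Proof.
move=> hi; rewrite -nth_last size_rot; last lia.
rewrite nth_rot; try lia.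
rewrite ifF; last lia. congr nth; lia.
Qed.

Lemma rot_S Q y : rotations e x0 P Q -> e (last x0 Q) y ->
  (index y Q).+2 < size P -> nth x0 Q (index y Q).+1 \in S.
Proof.
move=> hr he hi; have hQ := rot_ok hr; have hy := longest hr he.
have hi' : (index y Q).+2 < size Q by rewrite (ok_size hQ).
rewrite -last_rot //; apply: lastQ_S; apply: rt_trans hr _; apply: rt_step.
by exists (index y Q); split => //; rewrite nth_index.
Qed.


Definition T := locked (nbhd_out e S).
Definition U := locked (S :|: T).
Definition dg v := #|[set u in U | e v u]|.
Definition T1 := [set t in T | dg t <= 1].

Lemma inT t : (t \in T) = (t \notin S) && [exists u in S, e u t].
Proof. by rewrite /T -lock /nbhd_out inE. Qed.

Lemma inU u : (u \in U) = (u \in S) || (u \in T).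
Proof. by rewrite /U -lock inE. Qed.

Lemma T_notS t : t \in T -> t \notin S.
Proof. by rewrite inT => /andP []. Qed.

Lemma T_nb t : t \in T -> exists2 s, s \in S & e s t.
Proof. by rewrite inT => /andP [_ /exists_inP [s hs he]]; exists s. Qed.

Lemma nbS_U s u : s \in S -> e s u -> u \in U.
Proof.
move=> hs he; rewrite inU; case: (boolP (u \in S)) => //= hu.
by rewrite inT hu; apply/exists_inP; exists s.
Qed.

Lemma S_U s : s \in S -> s \in U.
Proof. by move=> hs; rewrite inU hs. Qed.
Lemma T_U t : t \in T -> t \in U.
Proof. by move=> ht; rewrite inU ht orbT. Qed.

Lemma dgS s : s \in S -> dg s = gdeg e s.
Proof.
move=> hs; rewrite /dg /gdeg.
have -> // : [set u in U | e s u] = [set w | e s w].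
apply/setP => u; rewrite !inE.
case: (boolP (e s u)) => he; rewrite ?andbT ?andbF //.
exact: nbS_U hs he.
Qed.

Lemma T1_T t : t \in T1 -> t \in T.
Proof. by rewrite inE => /andP []. Qed.

Lemma adj_ok Q k : okp Q -> k.+1 < size P -> e (nth x0 Q k) (nth x0 Q k.+1).
Proof. by move=> hQ hk; case: (hQ) => _ _; apply; rewrite (ok_size hQ). Qed.

Lemma ok_nth_inj Q i j : okp Q -> i < size P -> j < size P ->
  nth x0 Q i = nth x0 Q j -> i = j.
Proof.
move=> hQ hi hj /eqP; rewrite nth_uniq ?(ok_size hQ) ?(ok_uniq hQ) //; exact/eqP.
Qed.

Lemma index_ltn Q y : okp Q -> y \in Q -> index y Q < size P.
Proof. by move=> hQ hy; rewrite -(ok_size hQ) index_mem. Qed.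

Lemma predW t s Q : t \in T -> dg t <= 1 -> s \in S -> e s t ->
  rotations e x0 P Q -> last x0 Q = s -> index t Q = (size P).-2.
Proof.
move=> ht hd hs he hr hl; have hQ := rot_ok hr.
have hlt : e (last x0 Q) t by rewrite hl.
have htQ := longest hr hlt; have hp := index_ltn hQ htQ.
have h2 := size_P2.
have hsn : nth x0 Q (size P).-1 = s by rewrite -last_nth.
have htn : nth x0 Q (index t Q) = t by rewrite nth_index.
case: (ltnP (index t Q).+2 (size P)) => hc; last first.
  case: (index t Q =P (size P).-1) => hq; last by lia.
  by move: (T_notS ht); rewrite -htn hq hsn hs.
have hg := rot_S hr hlt hc.
set g := nth x0 Q (index t Q).+1 in hg.
have heg : e t g by rewrite -{1}htn; apply: (adj_ok hQ); lia.
have hgs : g != s.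
  apply/eqP; rewrite -hsn => /(ok_nth_inj hQ); lia.
have : 2 <= dg t.
  have -> : 2 = #|[set s; g]| by rewrite cards2 eq_sym hgs.
  apply: subset_leq_card; apply/subsetP => u; rewrite !inE => /orP [] /eqP ->.
    by rewrite (S_U hs) e_sym.
  by rewrite (S_U hg) heg.
lia.
Qed.

Lemma T1_nb s : s \in S -> #|[set t in T1 | e s t]| <= 1.
Proof.
move=> hs; have [Q [hr hl]] := S_real hs.
apply/card_le1_eqP => t1 t2; rewrite !inE => /andP [/andP [h1 d1] he1] /andP [/andP [h2 d2] he2].
have i1 := predW h1 d1 hs he1 hr hl; have i2 := predW h2 d2 hs he2 hr hl.
have m1 : t1 \in Q by apply: longest hr _; rewrite hl.
have m2 : t2 \in Q by apply: longest hr _; rewrite hl.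
by rewrite -(nth_index x0 m1) -(nth_index x0 m2) i1 i2.
Qed.

Lemma T1_le_S : #|T1| <= #|S|.
Proof.
have : #|T1| <= \sum_(t in T1) #|[set s in S | e s t]|.
  rewrite -sum1_card; apply: leq_sum => t ht; rewrite card_gt0.
  have [s hs he] := T_nb (T1_T ht); by apply/set0Pn; exists s; rewrite inE hs he.
move=> h; apply: leq_trans h _; rewrite -(dcount S T1 e).
rewrite -sum1_card; apply: leq_sum => s hs; exact: T1_nb.
Qed.


Definition Eset := [set X : {set V} | (X \subset U) &&
        [exists x, exists y, e x y && (X == [set x; y])]].

Lemma handshake : \sum_(v in U) dg v <= 2 * edges_in e U.
Proof.
have -> : edges_in e U = #|Eset| by [].
have h1 : forall v, v \in U -> dg v <= #|[set X in Eset | v \in X]|.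
  move=> v hv; rewrite /dg -(@card_in_imset _ _ (fun u => [set v; u])); last first.
    move=> u1 u2; rewrite !inE => /andP [_ h1] /andP [_ h2] heq.
    have : u1 \in [set v; u2] by rewrite -heq !inE eqxx orbT.
    rewrite !inE => /orP [/eqP hu|/eqP //].
    by move: h1; rewrite hu e_irr.
  apply: subset_leq_card; apply/subsetP => X /imsetP [u]; rewrite inE => /andP [hu he] ->.
  rewrite !inE eqxx andbT; apply/andP; split.
    by apply/subsetP => z; rewrite !inE => /orP [] /eqP ->.
  by apply/existsP; exists v; apply/existsP; exists u; rewrite he eqxx.
apply: (@leq_trans (\sum_(v in U) #|[set X in Eset | v \in X]|)); first by apply: leq_sum.
rewrite (dcount U Eset (fun v X => v \in X)).
rewrite mulnC -sum_nat_const; apply: leq_sum => X; rewrite inE => /andP [_].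
move=> /existsP [x /existsP [y /andP [_ /eqP ->]]].
apply: leq_trans (_ : #|[set x; y]| <= 2); last by rewrite cards2; case: (x != y).
by apply: subset_leq_card; apply/subsetP => z; rewrite inE => /andP [].
Qed.


Lemma ST_disj : [disjoint S & T].
Proof.
apply/pred0P => v /=; apply/negP => /andP [hs ht].
by move: (T_notS ht); rewrite hs.
Qed.

Lemma cardU : #|U| = #|S| + #|T|.
Proof.
rewrite /U -lock cardsU.
have -> : S :&: T = set0.
  apply/setP => v; rewrite !inE; apply/negP => /andP [hs ht].
  by move: (T_notS ht); rewrite hs.
by rewrite cards0 subn0.
Qed.

Lemma sum_U (f : V -> nat) : \sum_(v in U) f v = \sum_(v in S) f v + \sum_(v in T) f v.
Proof.
rewrite -bigU; last exact: ST_disj.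
by apply: eq_bigl => v; rewrite inU.
Qed.

Lemma sumT1 : \sum_(t in T) (t \in T1 : nat) = #|T1|.
Proof.
have -> : #|T1| = \sum_(t | (t \in T) && (t \in T1)) 1.
  rewrite -sum1_card; apply: eq_bigl => t.
  by apply/idP/andP => [h|[]//]; split=> //; apply: T1_T h.
by rewrite big_mkcondr; apply: eq_bigr => t _; case: (t \in T1).
Qed.

Definition S0 := [set s in S | [exists u in S, e s u]].


Lemma cardsU_le (A B : {set V}) : #|A :|: B| <= #|A| + #|B|.
Proof. by rewrite cardsU leq_subr. Qed.

Definition adjq (Q : seq V) a b :=
  exists k, [/\ k.+1 < size Q, nth x0 Q k = a & nth x0 Q k.+1 = b].
Definition sadj Q a b := adjq Q a b \/ adjq Q b a.

Lemma adjq_rot A i a b : i.+2 < size A -> nth x0 A i.+1 \in S ->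
  a \notin S -> b \notin S -> adjq A a b -> sadj (rot i A) a b.
Proof.
move=> hi hS ha hb [k [hk hka hkb]].
have hi1 : i < size A by exact: ltnW (ltnW hi).
have hsz := size_rot hi1.
case: (ltnP k i) => h1.
  have hk1 : k < size A by exact: ltnW hk.
  left; exists k; split; first by rewrite hsz.
    by rewrite nth_rot // (ltnW h1).
  by rewrite nth_rot // h1.
case: (k =P i) => h2.
  by move: hS; rewrite -h2 hkb (negbTE hb).
have h3 : i < k by rewrite ltn_neqAle h1 andbT eq_sym; apply/eqP.
right; exists (size A + i - k.+1); split.
- rewrite hsz. have : k.+1 < size A := hk. move: h3. clear. lia.
- rewrite nth_rot //; last by move: h3 hk; clear; lia.
  rewrite ifF; last by move: h3 hk; clear; lia.
  rewrite -hkb; congr nth; move: h3 hk; clear; lia.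
- rewrite nth_rot //; last by move: h3 hk; clear; lia.
  rewrite ifF; last by move: h3 hk; clear; lia.
  rewrite -hka; congr nth; move: h3 hk; clear; lia.
Qed.

Definition persist Q := forall k, k.+1 < size P -> nth x0 P k \notin S ->
  nth x0 P k.+1 \notin S -> sadj Q (nth x0 P k) (nth x0 P k.+1).

Lemma persist_all Q : rotations e x0 P Q -> persist Q.
Proof.
apply: (rot_ind (Inv := persist)).
  by move=> k hk _ _; left; exists k.
move=> A B hr hst hA k hk ha hb.
have hB : rotations e x0 P B by apply: rt_trans hr (rt_step _ _ _ _ hst).
move: hst hB => [i [hi he ->]] hB.
have hS : nth x0 A i.+1 \in S by rewrite -last_rot //; apply: lastQ_S.
case: (hA k hk ha hb) => h.
  exact: adjq_rot.
by case: (adjq_rot hi hS hb ha h) => h'; [right|left].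
Qed.

Lemma sadj_pos Q p t z : okp Q -> p < size P -> nth x0 Q p = t -> sadj Q t z ->
  z = nth x0 Q p.+1 \/ (0 < p /\ z = nth x0 Q p.-1).
Proof.
move=> hQ hp hpt [] [j [hj hjt hjz]].
- left; have hj' : j < size P by rewrite -(ok_size hQ); exact: ltnW.
  have := ok_nth_inj hQ hj' hp; rewrite hjt hpt => /(_ erefl) hjp.
  by rewrite -hjz hjp.
- right; have hj' : j.+1 < size P by rewrite -(ok_size hQ).
  have := ok_nth_inj hQ hj' hp; rewrite hjz hpt => /(_ erefl) hjp.
  by rewrite -hjp /= hjt.
Qed.

Lemma posa t : t \in T ->
  ((index t P).+1 < size P /\ nth x0 P (index t P).+1 \in S) \/
  (0 < index t P /\ nth x0 P (index t P).-1 \in S).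
Proof.
move=> ht; have [s hs hst] := T_nb ht; have [Q [hr hl]] := S_real hs.
have hQ := rot_ok hr; have hP := okpP; have hn2 := size_P2.
have hlt : e (last x0 Q) t by rewrite hl.
have htQ := longest hr hlt; have htP : t \in P by rewrite -(ok_mem hQ).
have hk := index_ltn hP htP; have hp := index_ltn hQ htQ.
have htS := T_notS ht.
have hkn : nth x0 P (index t P) = t by rewrite nth_index.
have hpn : nth x0 Q (index t Q) = t by rewrite nth_index.
have hsn : nth x0 Q (size P).-1 = s by rewrite -last_nth.
have hPn : nth x0 P (size P).-1 \in S.
  by rewrite -(last_nth hP); apply: lastQ_S; apply: rt_refl.
have hp1 : (index t Q).+1 < size P.
  case: (ltnP (index t Q).+1 (size P)) => // hc.
  have : index t Q = (size P).-1 by lia.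
  by move=> hq; move: htS; rewrite -hpn hq hsn hs.
have hy : nth x0 Q (index t Q).+1 \in S.
  case: (ltnP (index t Q).+2 (size P)) => hc; first exact: rot_S.
  have -> : (index t Q).+1 = (size P).-1 by lia.
  by rewrite hsn.
have hpers := persist_all hr.
case: (boolP (((index t P).+1 < size P) && (nth x0 P (index t P).+1 \in S))).
  by move=> /andP h; left.
move=> h1.
case: (boolP ((0 < index t P) && (nth x0 P (index t P).-1 \in S))).
  by move=> /andP h; right.
move=> hc2; exfalso.
case: (posnP (index t P)) => hk0.
- have ht0 : t = x0 by rewrite -hkn hk0; case: hP.
  have hq0 : index t Q = 0.
    apply: (ok_nth_inj hQ hp); first lia.
    by rewrite hpn; case: hQ => _ ->.
  have hP1 : nth x0 P 1 \notin S by move: h1; rewrite hk0 hn2.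
  have := hpers 0 hn2; rewrite -hk0 hkn => /(_ htS); rewrite hk0 => /(_ hP1).
  move/(sadj_pos hQ hp hpn); rewrite hq0 => -[hz|[]//].
  by move: hP1; rewrite hz -hq0 hy.
- have hkn1 : index t P != (size P).-1.
    by apply/eqP => hq; move: htS; rewrite -hkn hq hPn.
  have hk1 : (index t P).+1 < size P by lia.
  have hb : nth x0 P (index t P).+1 \notin S by move: h1; rewrite hk1.
  have ha : nth x0 P (index t P).-1 \notin S by move: hc2; rewrite hk0.
  have hab : nth x0 P (index t P).-1 != nth x0 P (index t P).+1.
    apply/eqP => /(ok_nth_inj hP); lia.
  have Ha : sadj Q t (nth x0 P (index t P).-1).
    have := hpers (index t P).-1; rewrite prednK // => /(_ hk ha); rewrite hkn.
    by move=> /(_ htS) [] h; [right|left].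
  have Hb : sadj Q t (nth x0 P (index t P).+1).
    by have := hpers (index t P) hk1; rewrite hkn => /(_ htS hb).
  case: (sadj_pos hQ hp hpn Ha) => [ea|[_ ea]].
    by move: ha; rewrite ea hy.
  case: (sadj_pos hQ hp hpn Hb) => [eb|[_ eb]].
    by move: hb; rewrite eb hy.
  by move: hab; rewrite ea eb eqxx.
Qed.

Lemma card_T : #|T| < (#|S|).*2.
Proof.
set lP := last x0 P.
have hP := okpP; have h2 := size_P2.
have hlP : lP \in S by apply: lastQ_S; apply: rt_refl.
have hsub : T \subset [set nth x0 P (index s P).-1 | s in S] :|:
                      [set nth x0 P (index s P).+1 | s in S :\ lP].
  apply/subsetP => t ht; have htP : t \in P.
    have [s hs hst] := T_nb ht; have [Q [hr hl]] := S_real hs.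
    by rewrite -(ok_mem (rot_ok hr)); apply: longest hr _; rewrite hl.
  have hk := index_ltn hP htP.
  have hkn : nth x0 P (index t P) = t by rewrite nth_index.
  rewrite inE; case: (posa ht) => [[h1 h2']|[h1 h2']]; apply/orP; [left|right].
  - apply/imsetP; exists (nth x0 P (index t P).+1) => //.
    by rewrite index_uniq ?P_uniq //= hkn.
  - apply/imsetP; exists (nth x0 P (index t P).-1).
      rewrite !inE h2' andbT; apply/eqP; rewrite /lP (last_nth hP).
      move/(ok_nth_inj hP); lia.
    have hk1 : (index t P).-1 < size P by exact: leq_ltn_trans (leq_pred _) hk.
    by rewrite index_uniq // ?P_uniq // prednK // hkn.
have := subset_leq_card hsub; have := cardsU_le
  [set nth x0 P (index s P).-1 | s in S] [set nth x0 P (index s P).+1 | s in S :\ lP].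
have := leq_imset_card (fun s => nth x0 P (index s P).-1) S.
have := leq_imset_card (fun s => nth x0 P (index s P).+1) (S :\ lP).
have := cardsD1 lP S; rewrite hlP.
lia.
Qed.

Section Tight.
Hypothesis Htight : edges_in e U <= #|U|.

Lemma tight_all : [/\ (forall s, s \in S -> dg s = 3),
   (forall t, t \in T -> dg t + (t \in T1) = 2) & #|S| <= #|T1|].
Proof.
have hS : forall s, s \in S -> 3 <= dg s by move=> s hs; rewrite dgS.
have hT : forall t, t \in T -> 2 <= dg t + (t \in T1).
  move=> t ht; case: (boolP (t \in T1)) => h1; last first.
    by move: h1; rewrite inE ht /= -ltnNge addn0.
  have [s hs he] := T_nb ht.
  have : 0 < dg t.
    rewrite /dg card_gt0; apply/set0Pn; exists s.
    by rewrite inE (S_U hs) e_sym.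
  by rewrite addn1.
have sS : #|S| * 3 <= \sum_(s in S) dg s.
  by rewrite -sum_nat_const; apply: leq_sum.
have sT : #|T| * 2 <= \sum_(t in T) (dg t + (t \in T1)).
  by rewrite -sum_nat_const; apply: leq_sum.
rewrite big_split /= sumT1 in sT.
have hh := handshake; rewrite sum_U in hh.
have hc := cardU; have h1 := T1_le_S.
split.
- apply: sum_tight_ge => //; lia.
- apply: sum_tight_ge => //; rewrite big_split /= sumT1; lia.
- lia.
Qed.

Lemma dgS3 s : s \in S -> gdeg e s = 3.
Proof. by move=> hs; rewrite -dgS //; case: tight_all => h _ _; apply: h. Qed.

Lemma dgT2 t : t \in T -> t \notin T1 -> dg t = 2.
Proof. by move=> ht h1; case: tight_all => _ h _; have := h t ht; rewrite (negbTE h1) addn0. Qed.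

Lemma T1_one s : s \in S -> #|[set t in T1 | e s t]| = 1.
Proof.
apply: (@sum_tight_le _ S (fun s => #|[set t in T1 | e s t]|) 1).
  by move=> s' hs'; apply: T1_nb.
rewrite (dcount S T1 e) muln1.
case: tight_all => _ _ h; apply: leq_trans h _.
rewrite -sum1_card; apply: leq_sum => t ht; rewrite card_gt0.
have [s' hs he] := T_nb (T1_T ht); by apply/set0Pn; exists s'; rewrite inE hs he.
Qed.

Lemma wS s : s \in S -> exists2 w, w \in T1 & e s w.
Proof.
move=> hs; have := T1_one hs; move/eqP; rewrite eqn_leq => /andP [_].
rewrite card_gt0 => /set0Pn [w]; rewrite inE => /andP [h1 h2]; by exists w.
Qed.


Lemma S_notT1 s : s \in S -> s \notin T1.
Proof. by move=> hs; apply/negP => /T1_T /T_notS; rewrite hs. Qed.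

Lemma ruleR Q s c : rotations e x0 P Q -> last x0 Q = s -> e s c -> c \notin T1 ->
  [/\ (index c Q).+2 < size P, nth x0 Q (index c Q).+1 \in S,
      e c (nth x0 Q (index c Q).+1) & nth x0 Q (index c Q).+1 != s].
Proof.
move=> hr hl he hc; have hQ := rot_ok hr.
have hs : s \in S by rewrite -hl; apply: lastQ_S.
have hlc : e (last x0 Q) c by rewrite hl.
have hcQ := longest hr hlc; have hp := index_ltn hQ hcQ.
have hcn : nth x0 Q (index c Q) = c by rewrite nth_index.
have hsn : nth x0 Q (size P).-1 = s by rewrite -last_nth.
have h2 := size_P2.
have [w hw hew] := wS hs.
have hwd : dg w <= 1 by move: hw; rewrite inE => /andP [].
have hwi := predW (T1_T hw) hwd hs hew hr hl.
have hwn : nth x0 Q (size P).-2 = w.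
  by rewrite -hwi nth_index //; apply: longest hr _; rewrite hl.
have hlt : (index c Q).+2 < size P.
  case: (ltnP (index c Q).+2 (size P)) => // hge.
  case: (index c Q =P (size P).-1) => hq.
    by move: he; rewrite -hcn hq hsn e_irr.
  have hq2 : index c Q = (size P).-2 by lia.
  by move: hc; rewrite -hcn hq2 hwn hw.
split => //.
- exact: rot_S hr hlc hlt.
- by rewrite -{1}hcn; apply: (adj_ok hQ); lia.
- by apply/eqP; rewrite -hsn => /(ok_nth_inj hQ); lia.
Qed.

Lemma C7 s c : s \in S0 -> e s c -> c \notin T1 -> c \in S.
Proof.
rewrite inE => /andP [hs /exists_inP [s' hs' hss']] hsc hc.
have [Q [hr hl]] := S_real hs'.
have hs's : e s' s by rewrite e_sym.
have [_ hg hsg hgs'] := ruleR hr hl hs's (S_notT1 hs).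
set g := nth x0 Q _ in hg hsg hgs'.
have [w hw hsw] := wS hs.
apply/negPn/negP => hcS.
have hwT := T_notS (T1_T hw).
have hu : uniq [:: w; s'; g; c].
  rewrite /= !inE !negb_or.
  have ns'g : s' != g by rewrite eq_sym.
  have nws' : w != s' by apply/eqP => h; move: hwT; rewrite h hs'.
  have nwg : w != g by apply/eqP => h; move: hwT; rewrite h hg.
  have nwc : w != c by apply/eqP => h; move: hc; rewrite -h hw.
  have ns'c : s' != c by apply/eqP => h; move: hcS; rewrite -h hs'.
  have ngc : g != c by apply/eqP => h; move: hcS; rewrite -h hg.
  by rewrite nws' nwg nwc ns'c ngc ns'g.
have : #|[:: w; s'; g; c]| <= gdeg e s.
  apply: subset_leq_card; apply/subsetP => u; rewrite !inE.
  by case/or4P => /eqP ->; rewrite ?hsw ?hss' ?hsc // e_sym.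
by rewrite (card_uniqP hu) dgS3.
Qed.


Lemma S0_step A B : rotations e x0 P A -> rotation_step e x0 A B ->
  (last x0 A \in S0) = (last x0 B \in S0).
Proof.
move=> hr [i [hi he ->]]; have hA := rot_ok hr.
have hsA := ok_size hA.
have hs : last x0 A \in S by apply: lastQ_S.
have hci : index (nth x0 A i) A = i.
  by rewrite index_uniq //; [exact: ltnW (ltnW hi) | exact: ok_uniq hA].
have hcT1 : nth x0 A i \notin T1.
  apply/negP => h1.
  have hd : dg (nth x0 A i) <= 1 by move: h1; rewrite inE => /andP [].
  have := predW (T1_T h1) hd hs he hr (erefl _); rewrite hci; lia.
have hi' : (index (nth x0 A i) A).+2 < size P by rewrite hci -hsA.
have hg : nth x0 A i.+1 \in S by rewrite -{1}hci; apply: rot_S.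
have hcg : e (nth x0 A i) (nth x0 A i.+1) by apply: (adj_ok hA); lia.
rewrite last_rot //.
apply/idP/idP => h.
- have hcS := C7 h he hcT1.
  by rewrite inE hg; apply/exists_inP; exists (nth x0 A i) => //; rewrite e_sym.
- apply/negPn/negP => hn.
  have hgc : e (nth x0 A i.+1) (nth x0 A i) by rewrite e_sym.
  have hcS := C7 h hgc hcT1.
  by move/negP: hn; apply; rewrite inE hs; apply/exists_inP; exists (nth x0 A i).
Qed.

Lemma S0_inv Q : rotations e x0 P Q -> (last x0 Q \in S0) = (last x0 P \in S0).
Proof.
apply: (rot_ind (Inv := fun Q => (last x0 Q \in S0) = (last x0 P \in S0))) => //.
by move=> A B hr hs hA; rewrite -(S0_step hr hs).
Qed.


Definition mS := find (fun v => v \in S) P.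

Lemma has_S : has (fun v => v \in S) P.
Proof.
apply/hasP; exists (last x0 P); last by apply: lastQ_S; apply: rt_refl.
rewrite (last_nth okpP) mem_nth // ltn_predL; exact: ltnW size_P2.
Qed.

Lemma mS_lt : mS < size P.
Proof. by rewrite /mS -has_find has_S. Qed.

Lemma mS_in : nth x0 P mS \in S.
Proof. exact: (nth_find x0 has_S). Qed.

Lemma mS_before k : k < mS -> nth x0 P k \notin S.
Proof. by move=> hk; rewrite (before_find x0 hk). Qed.

Lemma mS_pos : 0 < mS.
Proof.
case: (posnP mS) => // h0; move: mS_in; rewrite h0.
have [_ -> _] := okpP; by rewrite (negbTE x0_notin_S).
Qed.

Lemma mS_lt2 : mS < (size P).-1.
Proof.
have h2 := size_P2; have hm := mS_lt.
case: (ltnP mS (size P).-1) => // hge.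
have hmn : mS = (size P).-1 by lia.
set xh := last x0 P.
have hxhn : nth x0 P (size P).-1 = xh by rewrite -(last_nth okpP).
have : ~~ ([set u | e xh u] \subset [set nth x0 P (size P).-2]).
  apply/negP => /subset_leq_card; rewrite cards1.
  by have := mindeg xh; rewrite /gdeg; lia.
case/subsetPn => y; rewrite !inE => hy hyn.
have hr : rotations e x0 P P by apply: rt_refl.
have hyP := longest hr hy.
have hp := index_ltn okpP hyP.
have hyn' : nth x0 P (index y P) = y by rewrite nth_index.
have hlt : (index y P).+2 < size P.
  case: (ltnP (index y P).+2 (size P)) => // hc.
  case: (index y P =P (size P).-1) => hq.
    by move: hy; rewrite -hyn' hq hxhn e_irr.
  have hq2 : index y P = (size P).-2 by lia.
  by move: hyn; rewrite -hyn' hq2 eqxx.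
have hk : (index y P).+1 < mS by lia.
by have := rot_S hr hy hlt; rewrite (negbTE (mS_before hk)).
Qed.

Lemma prefix_inv Q : rotations e x0 P Q -> take mS Q = take mS P.
Proof.
apply: (rot_ind (Inv := fun Q => take mS Q = take mS P)) => //.
move=> A B hr hst hA; have hB : rotations e x0 P B by apply: rt_trans hr (rt_step _ _ _ _ hst).
move: hst hB => [i [hi he ->]] hB.
case: (leqP mS i.+1) => hm.
  rewrite /rot takel_cat; last by rewrite size_takel //; exact: ltnW (ltnW hi).
  by rewrite take_takel.
have := lastQ_S hB; rewrite last_rot // -(nth_take x0 hm) hA nth_take //.
by rewrite (negbTE (mS_before hm)).
Qed.


Lemma lastP_notS0 : last x0 P \notin S0.
Proof.
have [Q [hr hl]] := S_real mS_in.
have hQ := rot_ok hr; have hpre := prefix_inv hr.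
have hm0 := mS_pos; have hm2 := mS_lt2; have h2 := size_P2.
have hm1 : mS.-1 < mS by rewrite ltn_predL.
have hzQ : nth x0 Q mS.-1 = nth x0 P mS.-1.
  by rewrite -(nth_take x0 hm1) hpre nth_take.
have hzS := mS_before hm1.
have hez : e (nth x0 P mS) (nth x0 P mS.-1).
  rewrite e_sym; have := adj_ok okpP (k := mS.-1); rewrite prednK //; apply; exact: mS_lt.
have hzT : nth x0 P mS.-1 \in T.
  by rewrite inT hzS; apply/exists_inP; exists (nth x0 P mS) => //; exact: mS_in.
have hzT1 : nth x0 P mS.-1 \notin T1.
  apply/negP => h1.
  have hd : dg (nth x0 P mS.-1) <= 1 by move: h1; rewrite inE => /andP [].
  have := predW hzT hd mS_in hez hr hl.
  have hzin : nth x0 P mS.-1 \in Q by rewrite -hzQ mem_nth // (ok_size hQ); lia.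
  have hidx : index (nth x0 P mS.-1) Q = mS.-1.
    apply: (ok_nth_inj hQ); [exact: index_ltn hQ hzin | lia | by rewrite nth_index // hzQ].
  rewrite hidx; lia.
have hxm : nth x0 P mS \notin S0.
  by apply/negP => h; move: (C7 h hez hzT1); rewrite (negbTE hzS).
by rewrite -(S0_inv hr) hl.
Qed.

Lemma allS2 s : s \in S -> s \notin S0.
Proof.
move=> hs; have [Q [hr hl]] := S_real hs.
by rewrite -hl (S0_inv hr) lastP_notS0.
Qed.


Lemma T2_big : #|S| <= #|T :\: T1|.
Proof.
have hL : forall s, s \in S -> 2 <= #|[set t in T :\: T1 | e s t]|.
  move=> s hs; have h0 := allS2 hs.
  have hsub : [set u | e s u] \subset
      [set t in T1 | e s t] :|: [set t in T :\: T1 | e s t].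
    apply/subsetP => u; rewrite !inE => hsu.
    have hu := nbS_U hs hsu; rewrite inU in hu.
    case/orP: hu => hu.
      by move: h0; rewrite inE hs /=; move/exists_inP; case; exists u.
    by rewrite hu hsu /=; case: (dg u <= 1).
  have := subset_leq_card hsub; have := cardsU_le [set t in T1 | e s t] [set t in T :\: T1 | e s t].
  have := T1_nb hs; have := dgS3 hs; rewrite /gdeg; lia.
have hR : forall t, t \in T :\: T1 -> #|[set s in S | e s t]| <= 2.
  move=> t; rewrite inE => /andP [h1 ht]; rewrite -(dgT2 ht h1).
  apply: subset_leq_card; apply/subsetP => u; rewrite !inE => /andP [hu hut].
  by rewrite (S_U hu) e_sym.
have := dcount S (T :\: T1) e.
have : #|S| * 2 <= \sum_(s in S) #|[set t in T :\: T1 | e s t]|.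
  by rewrite -sum_nat_const; apply: leq_sum.
have : \sum_(t in T :\: T1) #|[set s in S | e s t]| <= #|T :\: T1| * 2.
  by rewrite -sum_nat_const; apply: leq_sum.
lia.
Qed.

Lemma contra_final : False.
Proof.
have h := cardsID T1 T.
have hI : T :&: T1 = T1.
  by apply/setIidPr; apply/subsetP => t; apply: T1_T.
rewrite hI in h.
have := T2_big; have := card_T; case: tight_all => _ _ h1.
rewrite -addnn; lia.
Qed.

End Tight.

End Posa.

Theorem lemma2p1 (V : finType) (e : rel V)
  (e_sym : symmetric e) (e_irr : irreflexive e)
  (mindeg : forall v : V, 3 <= gdeg e v)
  (x0 : V) (P : seq V)
  (P_path : is_path_from e x0 P)
  (P_longest : forall q : seq V, is_path_from e x0 q -> size q <= size P)
  (S : {set V})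
  (S_def : forall v : V, v \in S <->
       (v = last x0 P \/
        exists q : seq V, rotations e x0 P q /\ last x0 q = v /\ v <> x0)) :
  #|S :|: nbhd_out e S| < edges_in e (S :|: nbhd_out e S).
Proof.
rewrite ltnNge; apply/negP => H.
have HU : U e S = S :|: nbhd_out e S by rewrite /U /T -!lock.
apply: (contra_final e_sym e_irr mindeg P_path P_longest S_def).
by rewrite HU.
Qed.
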